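(* Let $S$ be a semigroup with involution, $\phi:S\to\mathbb{H}$ positive definite, and $\lambda$ the representation of $S$ on the quaternionic pre-Hilbert space $H_\phi$ defined below. Then $\phi$ is exponentially bounded (i.e. $\alpha$-bounded for some absolute value $\alpha$ on $S$) if and only if $\lambda(s)$ is a bounded operator on $H_\phi$ (with respect to the norm $\|f\|=\langle f,f\rangle^{1/2}$) for every $s\in S$.
   Context: $\mathbb{H}$ is the real quaternion algebra. A semigroup with involution is a set $S$ with an associative binary operation $\circ$ with neutral element $e$ and a bijection $s\mapsto s^*$ with $(s^* )^*=s$, $(s\circ t)^*=t^*\circ s^*$. $\phi:S\to\mathbb{H}$ is positive definite if $\sum_{i,j=1}^k \overline{q_i}\phi(s_i^*\circ s_j)q_j$ is a nonnegative real number for all $k$, $s_i\in S$, $q_i\in\mathbb{H}$. An absolute value on $S$ is $\alpha:S\to[0,\infty)$ with $\alpha(e)=1$, $\alpha(s\circ t)\le\alpha(s)\alpha(t)$, $\alpha(s^* )=\alpha(s)$; $\phi$ is $\alpha$-bounded if $|\phi(s)|\le C\alpha(s)$ for all $s$ and some $C>0$. For $s\in S$ let $\phi_s:S\to\mathbb{H}$, $\phi_s(t)=\phi(t^*\circ s)$. $H_\phi$ is the right $\mathbb{H}$-linear span (scalars acting pointwise from the right) of $\{\phi_s\}_{s\in S}$ inside $\mathbb{H}^S$, with the quaternionic inner product $\langle \sum_s\phi_sq_s,\sum_t\phi_tp_t\rangle=\sum_{s,t}\overline{p_t}\,\phi(t^*\circ s)\,q_s$ (finite sums). The representation $\lambda$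 is given by $\lambda(s)\big(\sum_t\phi_tq_t\big)=\sum_t\phi_{s\circ t}q_t$. *)

(* Defs.v *)
From HB Require Import structures.
From mathcomp Require Import all_boot all_order all_algebra.
From mathcomp Require Import reals.
Set Implicit Arguments. Unset Strict Implicit. Unset Printing Implicit Defensive.
Import Order.TTheory GRing.Theory Num.Theory.
Local Open Scope ring_scope.

Section Quat.
Variable R : realType.

Record quat := Quat { qre : R; qi : R; qj : R; qk : R }.

Definition qzero : quat := Quat 0 0 0 0.
Definition qadd (p q : quat) : quat :=
  Quat (qre p + qre q) (qi p + qi q) (qj p + qj q) (qk p + qk q).
(* Hamilton product: i^2 = j^2 = k^2 = ijk = -1 *)
Definition qmul (p q : quat) : quat :=
  Quat (qre p * qre q - qi p * qi q - qj p * qj q - qk p * qk q)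
       (qre p * qi q + qi p * qre q + qj p * qk q - qk p * qj q)
       (qre p * qj q - qi p * qk q + qj p * qre q + qk p * qi q)
       (qre p * qk q + qi p * qj q - qj p * qi q + qk p * qre q).
Definition qconj (q : quat) : quat := Quat (qre q) (- qi q) (- qj q) (- qk q).
Definition qabs (q : quat) : R :=
  Num.sqrt (qre q ^+ 2 + qi q ^+ 2 + qj q ^+ 2 + qk q ^+ 2).
Definition qnonneg_real (q : quat) : Prop :=
  [/\ 0 <= qre q, qi q = 0, qj q = 0 & qk q = 0].
End Quat.

Definition inv_semigroup (S : Type) (op : S -> S -> S) (e : S) (star : S -> S) : Prop :=
  [/\ (forall s t u, op s (op t u) = op (op s t) u),
      (forall s, op e s = s /\ op s e = s),
      (forall s, star (star s) = s)
    & (forall s t, star (op s t) = op (star t) (star s))].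

Section PD.
Variables (R : realType) (S : Type) (op : S -> S -> S) (e : S) (star : S -> S).

Definition pos_def (phi : S -> quat R) : Prop :=
  forall (k : nat) (s : 'I_k -> S) (q : 'I_k -> quat R),
    qnonneg_real (\big[@qadd R/qzero R]_(i < k) \big[@qadd R/qzero R]_(j < k)
                    qmul (qmul (qconj (q i)) (phi (op (star (s i)) (s j)))) (q j)).

Definition absolute_value (alpha : S -> R) : Prop :=
  [/\ (forall s, 0 <= alpha s), alpha e = 1,
      (forall s t, alpha (op s t) <= alpha s * alpha t)
    & (forall s, alpha (star s) = alpha s)].

Definition alpha_bounded (alpha : S -> R) (phi : S -> quat R) : Prop :=
  exists C : R, 0 < C /\ forall s, qabs (phi s) <= C * alpha s.

Definition exp_bounded (phi : S -> quat R) : Prop :=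
  exists alpha, absolute_value alpha /\ alpha_bounded alpha phi.

(* An element of H_phi is given by a finite right-linear combination
   sum_t phi_t q_t, encoded as a list of pairs (t, q_t). *)
Definition hrep := seq (S * quat R).

Definition phi_at (phi : S -> quat R) (s : S) : S -> quat R :=
  fun t => phi (op (star t) s).

Definition hfun (phi : S -> quat R) (c : hrep) : S -> quat R :=
  fun u => \big[@qadd R/qzero R]_(p <- c) qmul (phi_at phi p.1 u) p.2.

(* <sum_s phi_s q_s, sum_t phi_t p_t> = sum_{s,t} conj(p_t) phi(t^* o s) q_s *)
Definition hinner (phi : S -> quat R) (c d : hrep) : quat R :=
  \big[@qadd R/qzero R]_(a <- c) \big[@qadd R/qzero R]_(b <- d)
     qmul (qmul (qconj b.2) (phi (op (star b.1) a.1))) a.2.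

(* ||f|| = <f,f>^{1/2}; <f,f> is a nonnegative real, so take its real part *)
Definition hnorm (phi : S -> quat R) (c : hrep) : R := Num.sqrt (qre (hinner phi c c)).

(* lambda(s) (sum_t phi_t q_t) = sum_t phi_{s o t} q_t *)
Definition lambda (s : S) (c : hrep) : hrep := map (fun p => (op s p.1, p.2)) c.

Definition bounded_op (phi : S -> quat R) (T : hrep -> hrep) : Prop :=
  exists M : R, 0 <= M /\ forall c : hrep, hnorm phi (T c) <= M * hnorm phi c.
End PD.

(* Main.v *)
Require Import Defs.
From mathcomp Require Import all_boot all_order all_algebra.
From mathcomp Require Import reals.
From mathcomp Require Import ring lra.
From mathcomp Require Import classical_sets.
From Stdlib Require Import Classical_Prop.
Set Implicit Arguments. Unset Strict Implicit. Unset Printing Implicit Defensive.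
Import Order.TTheory GRing.Theory Num.Theory.
Local Open Scope ring_scope.

Section QuatFacts.
Variable R : realType.
Implicit Types p q x : quat R.

Definition qnorm2 (q : quat R) : R := qre q ^+ 2 + qi q ^+ 2 + qj q ^+ 2 + qk q ^+ 2.

Lemma qnorm2_ge0 q : 0 <= qnorm2 q.
Proof. rewrite /qnorm2; case: q => a b c d /=; nra. Qed.

Lemma qnorm2M p q : qnorm2 (qmul p q) = qnorm2 p * qnorm2 q.
Proof. case: p => a b c d; case: q => a' b' c' d'; rewrite /qnorm2 /=; ring. Qed.

Lemma qnorm2C q : qnorm2 (qconj q) = qnorm2 q.
Proof. case: q => a b c d; rewrite /qnorm2 /=; ring. Qed.

Lemma qabs_ge0 q : 0 <= qabs q.
Proof. exact: sqrtr_ge0. Qed.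

Lemma qabsM p q : qabs (qmul p q) = qabs p * qabs q.
Proof.
rewrite /qabs -!/(qnorm2 _) qnorm2M sqrtrM //; exact: qnorm2_ge0.
Qed.

Lemma qabsC q : qabs (qconj q) = qabs q.
Proof. by rewrite /qabs -!/(qnorm2 _) qnorm2C. Qed.

Lemma qre_le_abs q : qre q <= qabs q.
Proof.
rewrite /qabs -/(qnorm2 _); apply: (le_trans (ler_norm _)).
rewrite -sqrtr_sqr ler_sqrt; last exact: qnorm2_ge0.
rewrite /qnorm2; case: q => a b c d /=; nra.
Qed.

Lemma qabs_le_sum q : qabs q <= `|qre q| + `|qi q| + `|qj q| + `|qk q|.
Proof.
rewrite /qabs.
have h : 0 <= `|qre q| + `|qi q| + `|qj q| + `|qk q| by rewrite !addr_ge0.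
rewrite -(ger0_norm h) -sqrtr_sqr ler_sqrt; last exact: sqr_ge0.
have e1 : qre q ^+ 2 = `|qre q| ^+ 2 by rewrite real_normK ?num_real.
have e2 : qi q ^+ 2 = `|qi q| ^+ 2 by rewrite real_normK ?num_real.
have e3 : qj q ^+ 2 = `|qj q| ^+ 2 by rewrite real_normK ?num_real.
have e4 : qk q ^+ 2 = `|qk q| ^+ 2 by rewrite real_normK ?num_real.
rewrite e1 e2 e3 e4.
have := normr_ge0 (qre q); have := normr_ge0 (qi q); have := normr_ge0 (qj q);
have := normr_ge0 (qk q); nra.
Qed.

Lemma qre_add p q : qre (qadd p q) = qre p + qre q. Proof. by []. Qed.

Lemma qre_big (I : Type) (r : seq I) (P : pred I) (F : I -> quat R) :
  qre (\big[@qadd R/qzero R]_(i <- r | P i) F i) = \sum_(i <- r | P i) qre (F i).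
Proof.
elim: r => [|a r IH]; first by rewrite !big_nil.
rewrite !big_cons; case: (P a) => //; by rewrite qre_add IH.
Qed.

End QuatFacts.

Section RealFacts.
Variable R : realType.

Lemma bern (h : R) n : 0 <= h -> 1 + n%:R * h <= (1 + h) ^+ n.
Proof.
move=> h0; elim: n => [|n IH]; first by rewrite mul0r addr0 expr0.
rewrite exprS -natr1.
have n0 : 0 <= n%:R :> R by exact: ler0n.
have p0 : 0 <= (1 + h) ^+ n by rewrite exprn_ge0 // addr_ge0.
nra.
Qed.

Lemma lim_lemma (x y b D : R) : 0 <= x -> 0 < y -> 0 <= b ->
  (forall n, x ^+ (2 ^ n) * y <= D * b ^+ (2 ^ n)) -> x <= b.
Proof.
move=> x0 y0 b0 h; rewrite leNgt; apply/negP => bx.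
have : b = 0 \/ 0 < b by move: b0; rewrite le0r => /orP[/eqP->|->]; [left|right].
case=> [b00|bp].
  have := h 0%N; rewrite expn0 !expr1 b00 mulr0; rewrite b00 in bx; nra.
set r := x / b.
have xr : x = r * b by rewrite /r divfK // gt_eqF.
have r1 : 1 < r by rewrite /r ltr_pdivlMr // mul1r.
have hr n : r ^+ (2 ^ n) * y <= D.
  have := h n; rewrite xr exprMn.
  have bN : 0 < b ^+ (2 ^ n) by rewrite exprn_gt0.
  move=> H; rewrite -(ler_pM2l bN); move: H; nra.
set hh := r - 1.
have hh0 : 0 < hh by rewrite /hh subr_gt0.
set z := `|D| / (hh * y).
have z0 : 0 <= z by rewrite /z divr_ge0 // mulr_ge0 // ltW.
have := archi_boundP z0; set m := Num.Def.archi_bound z => mz.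
have mN : (m < 2 ^ m)%N by apply: ltn_expl.
have mN' : m%:R <= (2 ^ m)%:R :> R by rewrite ler_nat ltnW.
have := @bern hh (2 ^ m) (ltW hh0); rewrite [1 + hh]addrC /hh subrK natrX => hb.
have := hr m => hm.
have hy : 0 < hh * y by rewrite mulr_gt0.
have : `|D| < m%:R * (hh * y) by rewrite -ltr_pdivrMr.
have := ler_norm D.
rewrite natrX in mN'.
have q1 : (1 + 2%:R ^+ m * hh) * y <= r ^+ (2 ^ m) * y by rewrite ler_pM2r.
have q2 : m%:R * (hh * y) <= 2%:R ^+ m * (hh * y) by rewrite ler_pM2r.
lra.
Qed.
End RealFacts.

Section Form.
Variables (R : realType) (S : Type) (op : S -> S -> S) (e : S) (star : S -> S)
  (phi : S -> quat R).
Hypothesis HS : inv_semigroup op e star.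
Hypothesis Hpd : pos_def op star phi.

Let assoc : forall s t u, op s (op t u) = op (op s t) u.
Proof. by case: HS. Qed.
Let unitl : forall s, op e s = s.
Proof. by case: HS => _ h _ _ s; case: (h s). Qed.
Let unitr : forall s, op s e = s.
Proof. by case: HS => _ h _ _ s; case: (h s). Qed.
Let starK : forall s, star (star s) = s.
Proof. by case: HS. Qed.
Let starM : forall s t, star (op s t) = op (star t) (star s).
Proof. by case: HS. Qed.

Lemma star_e : star e = e.
Proof.
symmetry; rewrite -{1}(starK e) -{1}(unitr (star e)) starM starK.
by rewrite unitr.
Qed.

Definition Bterm (a b : S * quat R) : R :=
  qre (qmul (qmul (qconj b.2) (phi (op (star b.1) a.1))) a.2).
Definition B (c d : hrep R S) : R := qre (hinner op star phi c d).

Lemma B_sum c d : B c d = \sum_(a <- c) \sum_(b <- d) Bterm a b.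
Proof. rewrite /B /hinner qre_big; apply: eq_bigr => a _; exact: qre_big. Qed.

Lemma B_catl c c' d : B (c ++ c') d = B c d + B c' d.
Proof. by rewrite !B_sum big_cat. Qed.
Lemma B_catr c d d' : B c (d ++ d') = B c d + B c d'.
Proof. by rewrite !B_sum -big_split; apply: eq_bigr => a _; rewrite big_cat. Qed.

Definition scl (r : R) (c : hrep R S) : hrep R S :=
  map (fun p => (p.1, qmul p.2 (Quat r 0 0 0))) c.

Lemma B_scll r c d : B (scl r c) d = r * B c d.
Proof.
rewrite !B_sum big_map mulr_sumr; apply: eq_bigr => a _; rewrite mulr_sumr.
apply: eq_bigr => b _; rewrite /Bterm /=.
case: (phi _) => x1 x2 x3 x4; case: b.2 => y1 y2 y3 y4; case: a.2 => z1 z2 z3 z4 /=.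
ring.
Qed.

Lemma B_sclr r c d : B c (scl r d) = r * B c d.
Proof.
rewrite !B_sum mulr_sumr; apply: eq_bigr => a _; rewrite big_map mulr_sumr.
apply: eq_bigr => b _; rewrite /Bterm /=.
case: (phi _) => x1 x2 x3 x4; case: b.2 => y1 y2 y3 y4; case: a.2 => z1 z2 z3 z4 /=.
ring.
Qed.

Lemma pd_pair (k : nat) (s : 'I_k -> S) (q : 'I_k -> quat R) :
  qnonneg_real (\big[@qadd R/qzero R]_(i < k) \big[@qadd R/qzero R]_(j < k)
                    qmul (qmul (qconj (q i)) (phi (op (star (s i)) (s j)))) (q j)).
Proof. exact: Hpd. Qed.

Lemma phi_herm x : phi (star x) = qconj (phi x).
Proof.
have real1 y : [/\ qi (phi (op (star y) y)) = 0, qj (phi (op (star y) y)) = 0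
                 & qk (phi (op (star y) y)) = 0].
  have := pd_pair (fun _ : 'I_1 => y) (fun _ => Quat 1 0 0 0).
  rewrite !big_ord_recl !big_ord0 /=.
  case: (phi _) => a b c d [_ /=]; rewrite /=.
  move=> h1 h2 h3; split; move: h1 h2 h3; rewrite /=; lra.
have [u1 u2 u3] := real1 e; have [w1 w2 w3] := real1 x.
rewrite star_e unitl in u1 u2 u3.
have key (p : quat R) := pd_pair (fun i : 'I_2 => if val i == 0%N then e else x)
   (fun i : 'I_2 => if val i == 0%N then Quat 1 0 0 0 else p).
have k1 := key (Quat 1 0 0 0). have k2 := key (Quat 0 1 0 0).
move: k1 k2; rewrite !big_ord_recl !big_ord0 /= star_e !unitl !unitr.
move: u1 u2 u3 w1 w2 w3.
case: (phi e) => a1 a2 a3 a4; case: (phi (op (star x) x)) => b1 b2 b3 b4;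
case: (phi x) => c1 c2 c3 c4; case: (phi (star x)) => d1 d2 d3 d4 /=.
move=> -> -> -> -> -> -> [_ /= h1 h2 h3] [_ /= g1 g2 g3].
rewrite /qconj /=.
have e1 : d1 = c1 by lra.
have e2 : d2 = - c2 by lra.
have e3 : d3 = - c3 by lra.
have e4 : d4 = - c4 by lra.
by rewrite e1 e2 e3 e4.
Qed.


Lemma Bterm_sym a b : Bterm a b = Bterm b a.
Proof.
rewrite /Bterm (_ : op (star a.1) b.1 = star (op (star b.1) a.1)); last by rewrite starM starK.
rewrite phi_herm.
case: (phi _) => x1 x2 x3 x4; case: b.2 => y1 y2 y3 y4; case: a.2 => z1 z2 z3 z4 /=.
ring.
Qed.

Lemma B_sym c d : B c d = B d c.
Proof.
rewrite !B_sum (exchange_big); apply: eq_bigr => a _; apply: eq_bigr => b _.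
exact: Bterm_sym.
Qed.

Lemma B_pos c : 0 <= B c c.
Proof.
have [h _ _ _] := pd_pair (fun i : 'I_(size c) => (nth (e, qzero R) c i).1)
                        (fun i : 'I_(size c) => (nth (e, qzero R) c i).2).
move: h; rewrite qre_big.
have -> : B c c = \sum_(i < size c) qre (\big[@qadd R/qzero R]_(j < size c)
      qmul (qmul (qconj (nth (e, qzero R) c i).2)
        (phi (op (star (nth (e, qzero R) c i).1) (nth (e, qzero R) c j).1)))
           (nth (e, qzero R) c j).2).
  rewrite B_sum (big_nth (e, qzero R)) big_mkord.
  under eq_bigr => i _ do rewrite (big_nth (e, qzero R)) big_mkord.
  rewrite exchange_big /=.
  apply: eq_bigr => i _; rewrite qre_big.
  by apply: eq_bigr.
by [].
Qed.

Definition hn (c : hrep R S) : R := hnorm op star phi c.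

Lemma hn_ge0 c : 0 <= hn c.
Proof. exact: sqrtr_ge0. Qed.

Lemma hn_sqr c : hn c ^+ 2 = B c c.
Proof. rewrite /hn /hnorm sqr_sqrtr //; exact: B_pos. Qed.

Lemma quad_CS (P Q X : R) : 0 <= Q ->
  (forall t, 0 <= P + 2 * t * X + t ^+ 2 * Q) -> X ^+ 2 <= P * Q.
Proof.
move=> Q0 h; have [Qp|] := ltrP 0 Q.
  have := h (- X / Q).
  have tQ : (- X / Q) * Q = - X by rewrite mulfVK // gt_eqF.
  set t := - X / Q => ht.
  have : 0 <= (P + 2 * t * X + t ^+ 2 * Q) * Q by rewrite mulr_ge0 // ltW.
  have -> : (P + 2 * t * X + t ^+ 2 * Q) * Q = P * Q + 2 * X * (t * Q) + (t * Q) ^+ 2.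
    by ring.
  rewrite tQ; nra.
move=> Qle; have Q00 : Q = 0 by apply/eqP; rewrite eq_le Qle Q0.
have [X0|XN] := eqVneq X 0; first by rewrite X0 Q00; nra.
have := h (- (P + 1) / (2 * X)).
have -> : 2 * (- (P + 1) / (2 * X)) * X = - (P + 1).
  by field; rewrite XN.
rewrite Q00; lra.
Qed.

Lemma B_quad c d t :
  B (c ++ scl t d) (c ++ scl t d) = B c c + 2 * t * B c d + t ^+ 2 * B d d.
Proof.
rewrite !B_catl !B_catr !B_scll !B_sclr (B_sym d c); ring.
Qed.

Lemma CS2 c d : B c d ^+ 2 <= B c c * B d d.
Proof.
apply: quad_CS; first exact: B_pos.
move=> t; rewrite -B_quad; exact: B_pos.
Qed.

Lemma CS c d : `|B c d| <= hn c * hn d.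
Proof.
rewrite -sqrtr_sqr /hn /hnorm -sqrtrM; last exact: B_pos.
rewrite ler_sqrt; last by rewrite mulr_ge0 // B_pos.
exact: CS2.
Qed.

Lemma B_adj s x y : B (lambda op s x) y = B x (lambda op (star s) y).
Proof.
rewrite !B_sum big_map; apply: eq_bigr => a _; rewrite big_map.
apply: eq_bigr => b _; rewrite /Bterm /= starM starK assoc //.
Qed.

Lemma lambda_comp s t (c : hrep R S) : lambda op s (lambda op t c) = lambda op (op s t) c.
Proof. rewrite /lambda -map_comp; apply: eq_map => p /=; by rewrite assoc. Qed.

Lemma lambda_e (c : hrep R S) : lambda op e c = c.
Proof. rewrite /lambda -[RHS]map_id; apply: eq_map => -[p q] /=; by rewrite unitl. Qed.


Definition one : quat R := Quat 1 0 0 0.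

Lemma B_single a b : B [:: a] [:: b] = Bterm a b.
Proof. by rewrite B_sum !big_cons !big_nil !addr0. Qed.

Lemma phi_bound s :
  qabs (phi s) <= 4 * (hn [:: (s, one)] * hn [:: (e, one)]).
Proof.
set X := hn [:: (s, one)] * hn [:: (e, one)].
have key u : B [:: (e, u)] [:: (e, u)] = B [:: (e, one)] [:: (e, one)] ->
    `|B [:: (s, one)] [:: (e, u)]| <= X.
  move=> E; apply: le_trans (CS _ _) _.
  have -> : hn [:: (e, u)] = hn [:: (e, one)].
    by rewrite /hn /hnorm; congr Num.sqrt; exact: E.
  by [].
have cmp u : B [:: (s, one)] [:: (e, u)] =
    qre (qmul (qconj u) (phi s)).
  rewrite B_single /Bterm /= star_e unitl.
  case: (phi s) => a1 a2 a3 a4; case: u => u1 u2 u3 u4 /=; ring.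
have nrm u : qnorm2 u = 1 -> (qre u = 0 \/ qi u = 0) ->
    B [:: (e, u)] [:: (e, u)] = B [:: (e, one)] [:: (e, one)].
  rewrite !B_single /Bterm /=.
  have [h1 h2 h3] : [/\ qi (phi (op (star e) e)) = 0, qj (phi (op (star e) e)) = 0
                 & qk (phi (op (star e) e)) = 0].
    have := pd_pair (fun _ : 'I_1 => e) (fun _ => one).
    rewrite !big_ord_recl !big_ord0 /=.
    case: (phi _) => a b c d [_ /=]; rewrite /=.
    move=> g1 g2 g3; split; move: g1 g2 g3; rewrite /=; lra.
  move: h1 h2 h3; case: (phi _) => a1 a2 a3 a4 /= -> -> ->.
  case: u => u1 u2 u3 u4; rewrite /qnorm2 /= => n1 _.
  transitivity (a1 * (u1 ^+ 2 + u2 ^+ 2 + u3 ^+ 2 + u4 ^+ 2)); first ring.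
  rewrite n1; ring.
have k1 := key one (nrm one ltac:(rewrite /qnorm2 /=; ring) (or_intror erefl)).
have k2 := key (Quat 0 1 0 0) (nrm (Quat 0 1 0 0) ltac:(rewrite /qnorm2 /=; ring) (or_introl erefl)).
have k3 := key (Quat 0 0 1 0) (nrm (Quat 0 0 1 0) ltac:(rewrite /qnorm2 /=; ring) (or_introl erefl)).
have k4 := key (Quat 0 0 0 1) (nrm (Quat 0 0 0 1) ltac:(rewrite /qnorm2 /=; ring) (or_introl erefl)).
rewrite !cmp in k1 k2 k3 k4.
apply: le_trans (qabs_le_sum _) _.
move: k1 k2 k3 k4; case: (phi s) => a1 a2 a3 a4 /=.
have -> : 1 * a1 - - 0 * a2 - - 0 * a3 - - 0 * a4 = a1 by ring.
have -> : 0 * a1 - -1 * a2 - - 0 * a3 - - 0 * a4 = a2 by ring.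
have -> : 0 * a1 - - 0 * a2 - -1 * a3 - - 0 * a4 = a3 by ring.
have -> : 0 * a1 - - 0 * a2 - - 0 * a3 - -1 * a4 = a4 by ring.
lra.
Qed.


Section Back.
Hypothesis hb : forall s, bounded_op op star phi (lambda op s).

Definition Mset s : set R :=
  fun M => 0 <= M /\ forall c, hn (lambda op s c) <= M * hn c.
Definition N s : R := inf (Mset s).

Lemma Mset_ne s : nonempty (Mset s).
Proof. by have [M [M0 HM]] := hb s; exists M. Qed.

Lemma Mset_lb s : has_lbound (Mset s).
Proof. by exists 0 => y [y0 _]. Qed.

Lemma N_le s M : Mset s M -> N s <= M.
Proof. by move=> h; apply: ge_inf (Mset_lb s) _ h. Qed.

Lemma N_ge0 s : 0 <= N s.
Proof. by apply: lb_le_inf (Mset_ne s) _ => y [y0 _]. Qed.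

Lemma N_bound s c : hn (lambda op s c) <= N s * hn c.
Proof.
have := hn_ge0 c; rewrite le0r => /orP[/eqP c0|cp].
  have [M [M0 HM]] := hb s; have := HM c; rewrite /hn in c0 *; rewrite c0 !mulr0.
  by [].
rewrite -ler_pdivrMr //; apply: lb_le_inf (Mset_ne s) _ => y [y0 hy].
by rewrite ler_pdivrMr.
Qed.

Lemma N_mul s t : N (op s t) <= N s * N t.
Proof.
apply: N_le; split; first by rewrite mulr_ge0 ?N_ge0.
move=> c; rewrite -lambda_comp; apply: le_trans (N_bound _ _) _.
rewrite -mulrA ler_wpM2l ?N_ge0 //; exact: N_bound.
Qed.

Lemma N_star s : N (star s) <= N s.
Proof.
apply: N_le; split; first exact: N_ge0.
move=> c; set y := lambda op (star s) c.
have h1 : hn y ^+ 2 <= hn c * (N s * hn y).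
  rewrite hn_sqr {1}/y B_adj starK.
  apply: le_trans (ler_norm _) _; apply: le_trans (CS _ _) _.
  rewrite ler_wpM2l ?hn_ge0 //; exact: N_bound.
rewrite leNgt; apply/negP => lt.
have p0 : 0 <= N s * hn c by rewrite mulr_ge0 ?N_ge0 ?hn_ge0.
have yp : 0 < hn y by apply: le_lt_trans lt.
have : (N s * hn c) * hn y < hn y * hn y by rewrite ltr_pM2r.
move: h1; rewrite expr2; lra.
Qed.

Lemma N_starE s : N (star s) = N s.
Proof.
apply/eqP; rewrite eq_le N_star /=; have := N_star (star s); by rewrite starK.
Qed.

Lemma back : exp_bounded op e star phi.
Proof.
have [[c0 c0p]|nc] := classic (exists c, 0 < hn c).
  exists N; split.
    split.
    - exact: N_ge0.
    - apply/eqP; rewrite eq_le; apply/andP; split.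
        apply: N_le; split => // c; by rewrite lambda_e mul1r.
      have := N_bound e c0; rewrite lambda_e -{1}(mul1r (hn c0)) ler_pM2r //.
    - exact: N_mul.
    - exact: N_starE.
  set h0 := hn [:: (e, one)].
  exists (4 * h0 ^+ 2 + 1); split; first by rewrite ltr_wpDl // mulr_ge0 // sqr_ge0.
  move=> s; apply: le_trans (phi_bound s) _.
  have hs : hn [:: (s, one)] <= N s * h0.
    have -> : [:: (s, one)] = lambda op s [:: (e, one)] by rewrite /lambda /= unitr.
    exact: N_bound.
  have := N_ge0 s; have := hn_ge0 [:: (s, one)]; have : 0 <= h0 by exact: hn_ge0.
  rewrite -/h0; nra.
exists (fun _ => 1); split.
  rewrite /absolute_value; split; [by [] | by [] | by move=> *; rewrite mulr1 | by []].
exists 1; split => // s; apply: le_trans (phi_bound s) _.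
have -> : hn [:: (e, one)] = 0.
  apply/eqP; rewrite eq_le hn_ge0 andbT leNgt; apply/negP => h; apply: nc.
  by exists [:: (e, one)].
by rewrite mulr0 mulr0 mulr1 ler01.
Qed.
End Back.


Section Fwd.
Variables (alpha : S -> R) (C : R).
Hypothesis Ha : absolute_value op e star alpha.
Hypothesis C0 : 0 < C.
Hypothesis Hphi : forall s, qabs (phi s) <= C * alpha s.

Let a_ge0 s : 0 <= alpha s. Proof. by case: Ha. Qed.
Let a_mul s t : alpha (op s t) <= alpha s * alpha t. Proof. by case: Ha. Qed.
Let a_star s : alpha (star s) = alpha s. Proof. by case: Ha. Qed.

Definition W (c : hrep R S) : R := \sum_(a <- c) qabs a.2 * alpha a.1.

Lemma W_ge0 c : 0 <= W c.
Proof. by apply: sumr_ge0 => a _; rewrite mulr_ge0 ?qabs_ge0 ?a_ge0. Qed.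

Lemma basic u c : hn (lambda op u c) ^+ 2 <= C * alpha u ^+ 2 * W c ^+ 2.
Proof.
rewrite hn_sqr B_sum big_map.
set K := C * alpha u ^+ 2.
apply: (le_trans (y := \sum_(a <- c) \sum_(b <- c)
    K * ((qabs b.2 * alpha b.1) * (qabs a.2 * alpha a.1)))).
  apply: ler_sum => a _; rewrite big_map; apply: ler_sum => b _.
  rewrite /Bterm; apply: le_trans (qre_le_abs _) _; rewrite !qabsM qabsC /=.
  set X := op (star (op u b.1)) (op u a.1).
  have hX : alpha X <= alpha u ^+ 2 * alpha b.1 * alpha a.1.
    apply: le_trans (a_mul _ _) _; rewrite a_star.
    have := a_mul u b.1; have := a_mul u a.1.
    have := a_ge0 u; have := a_ge0 b.1; have := a_ge0 a.1;
    have := a_ge0 (op u b.1); have := a_ge0 (op u a.1).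
    move=> h1 h2 h3 h4 h5 h6 h7.
    apply: le_trans (ler_pM h2 h1 h7 h6) _.
    rewrite le_eqVlt; apply/orP; left; apply/eqP; ring.
  have e1 : qabs (phi X) <= C * (alpha u ^+ 2 * alpha b.1 * alpha a.1).
    exact: le_trans (Hphi X) (ler_wpM2l (ltW C0) hX).
  have -> : K * (qabs b.2 * alpha b.1 * (qabs a.2 * alpha a.1)) =
      qabs b.2 * (C * (alpha u ^+ 2 * alpha b.1 * alpha a.1)) * qabs a.2.
    by rewrite /K; ring.
  by rewrite ler_wpM2r ?qabs_ge0 // ler_wpM2l ?qabs_ge0.
rewrite le_eqVlt; apply/orP; left; apply/eqP.
have -> : \sum_(a <- c) \sum_(b <- c) K * (qabs b.2 * alpha b.1 * (qabs a.2 * alpha a.1))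
   = \sum_(a <- c) (K * W c) * (qabs a.2 * alpha a.1).
  apply: eq_bigr => a _; rewrite /W mulr_sumr mulr_suml; apply: eq_bigr => b _; ring.
rewrite -mulr_sumr -/(W c); ring.
Qed.

Definition D c := Num.sqrt C * W c.

Lemma D_ge0 c : 0 <= D c.
Proof. by rewrite mulr_ge0 ?sqrtr_ge0 ?W_ge0. Qed.

Lemma Dbound u c : hn (lambda op u c) <= D c * alpha u.
Proof.
have h := basic u c.
have y0 : 0 <= D c * alpha u by rewrite mulr_ge0 ?D_ge0 ?a_ge0.
have x0 := hn_ge0 (lambda op u c).
have E : (D c * alpha u) ^+ 2 = C * alpha u ^+ 2 * W c ^+ 2.
  rewrite /D !exprMn sqr_sqrtr ?(ltW C0) //; ring.
rewrite -E in h.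
rewrite leNgt; apply/negP => lt.
have : (D c * alpha u) * (D c * alpha u) < hn (lambda op u c) * hn (lambda op u c).
  by apply: ltr_pM.
move: h; rewrite expr2; lra.
Qed.

Lemma step t c : hn (lambda op t c) ^+ 2 <= hn (lambda op (op (star t) t) c) * hn c.
Proof.
rewrite hn_sqr B_adj lambda_comp; apply: le_trans (ler_norm _) _.
by rewrite mulrC; exact: CS.
Qed.

Lemma iter c n : forall t,
  hn (lambda op t c) ^+ (2 ^ n) * hn c <= D c * (alpha t * hn c) ^+ (2 ^ n).
Proof.
elim: n => [|n IH] t.
  rewrite expn0 !expr1 mulrA; apply: ler_wpM2r; first exact: hn_ge0.
  exact: Dbound.
set x := hn (lambda op t c); set x' := hn (lambda op (op (star t) t) c).
set y := hn c; set m := (2 ^ n)%N.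
have x0 : 0 <= x by exact: hn_ge0.
have x'0 : 0 <= x' by exact: hn_ge0.
have y0 : 0 <= y by exact: hn_ge0.
rewrite expnS !exprM -/m.
have h1 : (x ^+ 2) ^+ m <= (x' * y) ^+ m.
  by apply: lerXn2r; rewrite ?nnegrE ?exprn_ge0 ?mulr_ge0 //; exact: step.
have h2 := IH (op (star t) t); rewrite -/x' -/y -/m in h2.
have at2 : alpha (op (star t) t) <= alpha t ^+ 2.
  by apply: le_trans (a_mul _ _) _; rewrite a_star expr2.
have h3 : (alpha (op (star t) t) * y) ^+ m <= (alpha t ^+ 2 * y) ^+ m.
  apply: lerXn2r; rewrite ?nnegrE ?exprn_ge0 ?mulr_ge0 ?a_ge0 //.
  by rewrite ler_wpM2r.
apply: (le_trans (y := (x' * y) ^+ m * y)).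
  by apply: ler_wpM2r.
rewrite exprMn -mulrA (mulrC (y ^+ m)) mulrA.
apply: (le_trans (y := D c * (alpha (op (star t) t) * y) ^+ m * y ^+ m)).
  by apply: ler_wpM2r; rewrite ?exprn_ge0.
apply: (le_trans (y := D c * (alpha t ^+ 2 * y) ^+ m * y ^+ m)).
  apply: ler_wpM2r; rewrite ?exprn_ge0 //.
  by apply: ler_wpM2l; [exact: D_ge0|].
rewrite le_eqVlt; apply/orP; left; apply/eqP.
rewrite -mulrA -exprMn; congr (_ * _); congr (_ ^+ _); ring.
Qed.

Lemma fwd t : bounded_op op star phi (lambda op t).
Proof.
exists (alpha t); split; first exact: a_ge0.
move=> c; rewrite -/(hn _) -/(hn c).
have := hn_ge0 c; rewrite le0r => /orP[/eqP c0|cp].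
  have := step t c; rewrite c0 mulr0 => h.
  have := hn_ge0 (lambda op t c); rewrite mulr0; nra.
apply: (@lim_lemma _ _ (hn c) _ (D c)) => //; first exact: hn_ge0.
  by rewrite mulr_ge0 ?a_ge0 // ltW.
move=> n; exact: iter.
Qed.

End Fwd.

End Form.

Theorem mainTheorem5 (R : realType) (S : Type) (op : S -> S -> S) (e : S)
  (star : S -> S) (phi : S -> quat R)
  (HS : inv_semigroup op e star) (Hpd : pos_def op star phi) :
  exp_bounded op e star phi <-> (forall s : S, bounded_op op star phi (lambda op s)).
Proof.
split.
- move=> [alpha [Ha [C [C0 HC]]]] s; exact: (fwd HS Hpd Ha C0 HC s).
- move=> hb; exact: (back HS Hpd hb).
Qed.
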